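(* Let $\sigma:\mathbb{Z}\to\mathbb{Z}$ be an admissible injective function. Then for every $k\in\mathbb{Z}$ there exist record indices $r_-$ and $r_+$ of $\sigma$ with $r_-<k<r_+$.
   Context: $\sigma:\mathbb{Z}\to\mathbb{Z}$ is admissible if $|\{i\in\mathbb{N}:\sigma(i)\notin\mathbb{N}\}|+|\{i\in\mathbb{Z}\setminus\mathbb{N}:\sigma(i)\in\mathbb{N}\}|<\infty$, where $\mathbb{N}=\{1,2,\dots\}$. A record index of $\sigma$ is an $r\in\mathbb{Z}$ such that $\sigma(r)>\sigma(k)$ for all $k<r$. *)

(* Defs.v *)
From Stdlib Require Import ZArith List.
Open Scope Z_scope.

Definition inN (i : Z) : Prop := 1 <= i.

Definition finite_setZ (P : Z -> Prop) : Prop :=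
  exists l : list Z, forall i, P i -> In i l.

Definition admissible (sigma : Z -> Z) : Prop :=
  finite_setZ (fun i => inN i /\ ~ inN (sigma i)) /\
  finite_setZ (fun i => ~ inN i /\ inN (sigma i)).

Definition injectiveZ (sigma : Z -> Z) : Prop :=
  forall x y, sigma x = sigma y -> x = y.

Definition record_index (sigma : Z -> Z) (r : Z) : Prop :=
  forall k, k < r -> sigma k < sigma r.

(* Main.v *)
Require Import Defs.
From Stdlib Require Import ZArith List.
From Stdlib Require Import Lia FinFun Classical.
Open Scope Z_scope.

Lemma fold_max_ge (f : Z -> Z) l x : In x l -> f x <= fold_right Z.max 0 (map f l).
Proof.
  induction l as [|a l IH]; simpl; [tauto|].
  intros [->|H]; [lia|]. specialize (IH H). lia.
Qed.

Lemma fold_max_ge0 l : 0 <= fold_right Z.max 0 l.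
Proof. induction l; simpl; lia. Qed.

Lemma threshold (P : Z -> Prop) a b : a <= b -> P a -> ~ P b ->
  exists v, P v /\ ~ P (v + 1).
Proof.
  intros Hab.
  assert (Hb : b = a + Z.of_nat (Z.to_nat (b - a))) by lia.
  rewrite Hb. generalize (Z.to_nat (b - a)) as n. clear Hb Hab.
  intro n; revert a; induction n as [|n IH]; intros a Ha Hn.
  - exfalso; apply Hn; replace (a + Z.of_nat 0) with a by lia; exact Ha.
  - destruct (classic (P (a + 1))) as [H|H].
    + apply (IH (a+1) H). replace (a + 1 + Z.of_nat n) with (a + Z.of_nat (S n)) by lia. exact Hn.
    + exists a; auto.
Qed.

Lemma bounded (sigma : Z -> Z) (Hadm : admissible sigma) m :
  exists U, forall j, j <= m -> sigma j <= U.
Proof.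
  destruct Hadm as [_ [lB HB]].
  set (lr := map (fun n => 1 + Z.of_nat n) (seq 0 (Z.to_nat m))).
  exists (fold_right Z.max 0 (map sigma (lB ++ lr))).
  intros j Hj.
  destruct (Z_le_gt_dec j 0) as [Hj0|Hj0].
  - destruct (Z_le_gt_dec (sigma j) 0) as [Hs|Hs].
    + pose proof (fold_max_ge0 (map sigma (lB ++ lr))). lia.
    + apply fold_max_ge, in_or_app; left; apply HB; unfold inN; lia.
  - apply fold_max_ge, in_or_app; right. unfold lr. apply in_map_iff.
    exists (Z.to_nat (j - 1)). split; [lia|]. apply in_seq; lia.
Qed.

Lemma max_attained (sigma : Z -> Z) (Hadm : admissible sigma) m :
  exists r, r <= m /\ forall j, j <= m -> sigma j <= sigma r.
Proof.
  destruct (bounded sigma Hadm m) as [U HU].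
  destruct (threshold (fun v => exists j, j <= m /\ v <= sigma j) (sigma m) (U + 1))
    as [v [[j [Hj Hv]] Hn]].
  - specialize (HU m (Z.le_refl _)); lia.
  - exists m; lia.
  - intros [j [Hj H]]; specialize (HU j Hj); lia.
  - exists j; split; auto. intros i Hi.
    destruct (Z_le_gt_dec (sigma i) (sigma j)); auto.
    exfalso; apply Hn; exists i; split; auto; lia.
Qed.

Lemma exceed (sigma : Z -> Z) (Hadm : admissible sigma) (Hinj : injectiveZ sigma) k M :
  exists r, k < r /\ M < sigma r.
Proof.
  apply NNPP; intro Hc.
  assert (Hall : forall r, k < r -> sigma r <= M).
  { intros r Hr. destruct (Z_le_gt_dec (sigma r) M); auto. exfalso; apply Hc; exists r; split; auto; lia. }
  destruct Hadm as [[lA HA] _].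
  set (N0 := Z.max k (Z.max 0 (fold_right Z.max 0 (map (fun x => x) lA)))).
  assert (Hpos : forall i, N0 < i -> 1 <= sigma i <= M).
  { intros i Hi. split.
    - destruct (Z_le_gt_dec 1 (sigma i)); auto. exfalso.
      assert (In i lA) by (apply HA; unfold inN, N0 in *; lia).
      pose proof (fold_max_ge (fun x => x) lA i H) as H2. cbv beta in H2. unfold N0 in Hi. lia.
    - apply Hall. unfold N0 in Hi; lia. }
  set (idx := map (fun n => N0 + 1 + Z.of_nat n) (seq 0 (S (Z.to_nat M)))).
  set (vals := map (fun n => 1 + Z.of_nat n) (seq 0 (Z.to_nat M))).
  assert (ND : NoDup (map sigma idx)).
  { apply Injective_map_NoDup; [exact Hinj|]. apply Injective_map_NoDup; [|apply seq_NoDup].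
    intros x y H; lia. }
  assert (Inc : incl (map sigma idx) vals).
  { intros y Hy. apply in_map_iff in Hy as [i [<- Hi]].
    unfold idx in Hi; apply in_map_iff in Hi as [n [<- Hn]].
    pose proof (Hpos (N0 + 1 + Z.of_nat n) ltac:(lia)).
    unfold vals; apply in_map_iff.
    exists (Z.to_nat (sigma (N0 + 1 + Z.of_nat n) - 1)). split; [lia|]. apply in_seq; lia. }
  pose proof (NoDup_incl_length ND Inc).
  unfold vals, idx in H; rewrite !length_map, !length_seq in H. lia.
Qed.

Theorem lemma2p3 (sigma : Z -> Z) (Hadm : admissible sigma) (Hinj : injectiveZ sigma) :
  forall k : Z, exists rm rp : Z,
    record_index sigma rm /\ record_index sigma rp /\ rm < k /\ k < rp.
Proof.
  intro k.
  destruct (max_attained sigma Hadm (k - 1)) as [rm [Hrm Hmax]].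
  destruct (max_attained sigma Hadm k) as [q [Hq Hqmax]].
  set (M := sigma q).
  destruct (exceed sigma Hadm Hinj k M) as [r0 [Hr0 HM]].
  destruct (threshold (fun v => forall j, k < j < v -> sigma j <= M) (k + 1) (r0 + 1))
    as [v [Hv Hnv]].
  - lia.
  - intros j Hj; lia.
  - intro H; specialize (H r0 ltac:(lia)); lia.
  - assert (Hex : exists j, k < j < v + 1 /\ M < sigma j).
    { apply NNPP; intro Hc; apply Hnv; intros j Hj.
      destruct (Z_le_gt_dec (sigma j) M); auto. exfalso; apply Hc; exists j; split; auto; lia. }
    destruct Hex as [j [Hj Hsj]].
    assert (j = v).
    { destruct (Z.eq_dec j v); auto. specialize (Hv j ltac:(lia)); lia. }
    subst j.
    exists rm, v. split; [|split; [|split]]; try lia.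
    + intros i Hi. specialize (Hmax i ltac:(lia)).
      destruct (Z.eq_dec (sigma i) (sigma rm)) as [E|E]; [apply Hinj in E; lia | lia].
    + intros i Hi. destruct (Z_le_gt_dec i k).
      * specialize (Hqmax i l). unfold M in *; lia.
      * specialize (Hv i ltac:(lia)); lia.
Qed.
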